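(* Let $x_1^*,\dots,x_n^*$ satisfy $0\le x_i^*\le q_i$ for each $i$ and $x_1^*\le x_2^*\le\cdots\le x_n^*$. Then there exists a function $f$ such that $(f,x_1^*,\dots,x_n^* )$ is a feasible solution of the reward-design problem if and only if \[C\left(\frac{x_n^*}{q_n}+\sum_{i=1}^{n-1}\left((n-i)\left(\frac{1}{q_i}-\frac{1}{q_{i+1}}\right)+\frac{1}{q_i}\right)x_i^*\right)\le B.\] Moreover, if this inequality holds, then $(f,x_1^*,\dots,x_n^* )$ is feasible for the step function $f$ defined by $f(x)=0$ for $0\le x<x_1^*$, and for $x_j^*\le x<x_{j+1}^*$ ($1\le j\le n$, with $x_{n+1}^*=+\infty$) \[f(x)=C\left(\sum_{t=1}^{j-1}\left(\frac{x_t^*}{q_t}-\frac{x_t^*}{q_{t+1}}\right)+\frac{x_j^*}{q_j}\right).\]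
   Context: There are $n$ agents with types $0<q_1\le q_2\le\cdots\le q_n$, a cost constant $C>0$ and a budget $B>0$. A reward function is a map $f:[0,\infty)\to[0,\infty)$; agent $i$'s utility for producing quality $x$ is $u_i(x)=f(x)-xC/q_i$. A tuple $(f,x_1^*,\dots,x_n^* )$ is a feasible solution of the reward-design problem if for each $i$: $0\le x_i^*\le q_i$ and $u_i(x_i^* )\ge u_i(x)$ for all $x\in[0,q_i]$, and moreover $\sum_{i=1}^n f(x_i^* )\le B$. *)

(* Defs.v *)
From mathcomp Require Import all_boot all_order all_algebra.
From mathcomp Require Import reals.
Set Implicit Arguments. Unset Strict Implicit. Unset Printing Implicit Defensive.
Import Order.TTheory GRing.Theory Num.Theory.
Local Open Scope ring_scope.

(* A reward function maps [0,oo) to [0,oo); we model it as f : R -> R that is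
   nonnegative on [0,oo) (values at negative arguments are irrelevant). *)
Definition reward_fun (R : realType) (f : R -> R) : Prop :=
  forall x, 0 <= x -> 0 <= f x.

Definition utility (R : realType) (f : R -> R) (C qi x : R) : R :=
  f x - x * C / qi.

Definition feasible (R : realType) (n : nat) (q : nat -> R) (C B : R)
  (f : R -> R) (xs : nat -> R) : Prop :=
  reward_fun f /\
  (forall i : nat, (1 <= i <= n)%N ->
     0 <= xs i <= q i /\
     (forall x : R, 0 <= x <= q i -> utility f C (q i) x <= utility f C (q i) (xs i))) /\
  \sum_(1 <= i < n.+1) f (xs i) <= B.

Definition step_reward (R : realType) (n : nat) (q : nat -> R) (C : R)
  (xs : nat -> R) (x : R) : R :=
  if x < xs 1%N then 0
  else
    let j := (\max_(1 <= j < n.+1 | (xs j <= x)%R) j)%N in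
    C * (\sum_(1 <= t < j) (xs t / q t - xs t / q t.+1) + xs j / q j).

Definition budget_cond (R : realType) (n : nat) (q : nat -> R) (C B : R)
  (xs : nat -> R) : Prop :=
  C * (xs n / q n +
       \sum_(1 <= i < n) (((n - i)%:R * (1 / q i - 1 / q i.+1) + 1 / q i) * xs i))
  <= B.

(* Main.v *)
Require Import Defs.
From mathcomp Require Import all_boot all_order all_algebra.
From mathcomp Require Import reals.
From mathcomp Require Import ring lra zify.
Import Order.TTheory GRing.Theory Num.Theory.
Local Open Scope ring_scope.

Lemma max_in (P : pred nat) (a b : nat) :
  (exists2 k, (a <= k < b)%N & P k) ->
  ((a <= \max_(a <= j < b | P j) j < b) && P (\max_(a <= j < b | P j) j))%N.
Proof.
elim: b => [|b IH] [k /andP[h1 h2] Pk]; first by [].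
have ab : (a <= b)%N by lia.
have Mle : (\max_(a <= j < b | P j) j <= b)%N.
  apply/bigmax_leqP_seq => i; rewrite mem_index_iota => /andP[_ /ltnW] //.
rewrite big_mkcond big_nat_recr //= -big_mkcond.
case Pb: (P b).
  by rewrite (maxn_idPr Mle) Pb ab leqnn.
rewrite maxn0.
have kb : (k < b)%N by case: (ltngtP k b) => // ek; [lia| by rewrite ek Pb in Pk].
have /andP[/andP[H1 H2] H3] := IH (ex_intro2 _ _ k (introT andP (conj h1 kb)) Pk).
by rewrite H1 H3 ltnS ltnW.
Qed.

Definition Fv {R : realType} (q : nat -> R) (C : R) (xs : nat -> R) (j : nat) : R :=
  C * (\sum_(1 <= t < j) (xs t / q t - xs t / q t.+1) + xs j / q j).

Lemma Fv_step (R : realType) (q : nat -> R) (C : R) (xs : nat -> R) j :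
  (1 <= j)%N -> Fv q C xs j.+1 - Fv q C xs j = C * (xs j.+1 - xs j) / q j.+1.
Proof. by move=> hj; rewrite /Fv big_nat_recr //=; ring. Qed.

Lemma Fv_tele (R : realType) (q : nat -> R) (C : R) (xs : nat -> R) i j :
  (1 <= i <= j)%N -> Fv q C xs j - Fv q C xs i = \sum_(i <= k < j) C * (xs k.+1 - xs k) / q k.+1.
Proof.
elim: j => [|j IH] /andP[h1 h2]; first by lia.
case: (eqVneq i j.+1) => [->|ne]; first by rewrite big_geq // subrr.
have hij : (i <= j)%N by lia.
rewrite big_nat_recr //= -IH ?h1 ?hij // -Fv_step; last by lia.
ring.
Qed.

Lemma Fv_sum (R : realType) (q : nat -> R) (C : R) (xs : nat -> R) m :
  (1 <= m)%N -> \sum_(1 <= i < m.+1) Fv q C xs i =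
  C * (xs m / q m +
       \sum_(1 <= i < m) (((m - i)%:R * (1 / q i - 1 / q i.+1) + 1 / q i) * xs i)).
Proof.
elim: m => [//|m IH] _.
case: (eqVneq m 0%N) => [->|m0].
  by rewrite big_nat1 big_geq // /Fv big_geq //; ring.
have hm : (1 <= m)%N by lia.
rewrite big_nat_recr //= IH // (big_nat_recr m) //= subSnn.
have E : \sum_(1 <= i < m) (((m.+1 - i)%:R * (1 / q i - 1 / q i.+1) + 1 / q i) * xs i)
  = \sum_(1 <= i < m) (((m - i)%:R * (1 / q i - 1 / q i.+1) + 1 / q i) * xs i)
    + \sum_(1 <= i < m) (xs i / q i - xs i / q i.+1).
  rewrite -big_split /=; apply: eq_big_nat => i /andP[_ hi].
  rewrite subSn ?(ltnW hi) // mulrSr; ring.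
rewrite E /Fv big_nat_recr //=; ring.
Qed.

Lemma q_mono (R : realType) (n : nat) (q : nat -> R)
  (hq : forall i : nat, (1 <= i < n)%N -> q i <= q i.+1) a b :
  (1 <= a <= b)%N -> (b <= n)%N -> q a <= q b.
Proof.
elim: b => [|b IH] /andP[h1 h2] hb; first by lia.
case: (eqVneq a b.+1) => [->//|ne].
apply: le_trans (hq b _); last by lia.
apply: IH; lia.
Qed.
Arguments q_mono {R n q}.

Lemma U_le (R : realType) (n : nat) (q : nat -> R) (C : R) (xs : nat -> R)
  (hq1 : 0 < q 1%N)
  (hq : forall i : nat, (1 <= i < n)%N -> q i <= q i.+1)
  (hC : 0 < C)
  (hxs : forall i : nat, (1 <= i < n)%N -> xs i <= xs i.+1) i j :
  (1 <= i <= n)%N -> (1 <= j <= n)%N ->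
  Fv q C xs j - xs j * C / q i <= Fv q C xs i - xs i * C / q i.
Proof.
move=> hi hj.
have qpos : forall k, (1 <= k <= n)%N -> 0 < q k.
  move=> k hk; apply: lt_le_trans hq1 _; apply: (q_mono hq); lia.
have key : forall a b, (1 <= a <= b)%N -> (b <= n)%N ->
  (forall k, (a <= k < b)%N -> C * (xs k.+1 - xs k) / q k.+1 <= C * (xs k.+1 - xs k) / q i)
  -> Fv q C xs b - Fv q C xs a <= (xs b - xs a) * C / q i.
  move=> a b hab hbn hk; rewrite Fv_tele //.
  have -> : (xs b - xs a) * C / q i = \sum_(a <= k < b) C * (xs k.+1 - xs k) / q i.
    rewrite (telescope_sumr_eq (fun k => xs k * C / q i)); [ring | lia | move=> k _; ring].
  exact: ler_sum_nat.
have key2 : forall a b, (1 <= a <= b)%N -> (b <= n)%N ->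
  (forall k, (a <= k < b)%N -> C * (xs k.+1 - xs k) / q i <= C * (xs k.+1 - xs k) / q k.+1)
  -> (xs b - xs a) * C / q i <= Fv q C xs b - Fv q C xs a.
  move=> a b hab hbn hk; rewrite Fv_tele //.
  have -> : (xs b - xs a) * C / q i = \sum_(a <= k < b) C * (xs k.+1 - xs k) / q i.
    rewrite (telescope_sumr_eq (fun k => xs k * C / q i)); [ring | lia | move=> k _; ring].
  exact: ler_sum_nat.
have d0 : forall k, (1 <= k < n)%N -> 0 <= C * (xs k.+1 - xs k).
  move=> k hk; apply: mulr_ge0; first exact: ltW.
  by rewrite subr_ge0; apply: hxs.
case: (leqP j i) => hji.
  have H : (xs i - xs j) * C / q i <= Fv q C xs i - Fv q C xs j.
    apply: key2; try lia.
    move=> k hk; apply: ler_wpM2l; first by apply: d0; lia.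
    rewrite lef_pV2 ?posrE ?qpos //; try lia.
    apply: (q_mono hq); lia.
  have E : (xs i - xs j) * C / q i = xs i * C / q i - xs j * C / q i by ring.
  lra.
have H : Fv q C xs j - Fv q C xs i <= (xs j - xs i) * C / q i.
  apply: key; try lia.
  move=> k hk; apply: ler_wpM2l; first by apply: d0; lia.
  rewrite lef_pV2 ?posrE ?qpos //; try lia.
  apply: (q_mono hq); lia.
have E : (xs j - xs i) * C / q i = xs j * C / q i - xs i * C / q i by ring.
lra.
Qed.
Arguments U_le {R n q C xs}.

Lemma step_gen (R : realType) (n : nat) (q : nat -> R) (C : R) (xs : nat -> R) x :
  (1 <= n)%N -> ~~ (x < xs 1%N) ->
  exists2 j, (1 <= j <= n)%N & (xs j <= x) /\ step_reward n q C xs x = Fv q C xs j.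
Proof.
move=> hn h; rewrite /step_reward (negbTE h) /=.
rewrite -leNgt in h.
have hex : exists2 k, (1 <= k < n.+1)%N & (fun j => xs j <= x) k.
  by exists 1%N => //; rewrite ltnS hn.
have /andP[H1 H2] := @max_in (fun j => xs j <= x) 1 n.+1 hex.
exists (\max_(1 <= j < n.+1 | (xs j <= x)%R) j)%N; first by rewrite -ltnS.
by split.
Qed.

Lemma step_at (R : realType) (n : nat) (q : nat -> R) (C : R) (xs : nat -> R)
  (hxs : forall i : nat, (1 <= i < n)%N -> xs i <= xs i.+1) i :
  (1 <= i <= n)%N -> step_reward n q C xs (xs i) = Fv q C xs i.
Proof.
move=> hi.
have x1 : xs 1%N <= xs i by apply: (q_mono hxs); lia.
rewrite /step_reward ltNge x1 /=.
set M := (\max_(1 <= j < n.+1 | (xs j <= xs i)%R) j)%N.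
have hex : exists2 k, (1 <= k < n.+1)%N & (fun j => xs j <= xs i) k.
  by exists 1%N => //; rewrite ltnS; lia.
have /andP[H1 H2] := @max_in (fun j => xs j <= xs i) 1 n.+1 hex.
have iM : (i <= M)%N.
  by apply: (leq_bigmax_seq i) => //; rewrite mem_index_iota; lia.
apply/eqP; rewrite -subr_eq0; apply/eqP.
rewrite (@Fv_tele R q C xs i M); last by lia.
rewrite big_nat_cond big1 // => k /andP[/andP[hk1 hk2] _].
have a : xs i <= xs k by apply: (q_mono hxs); lia.
have b : xs k.+1 <= xs M by apply: (q_mono hxs); lia.
have c : xs k <= xs k.+1 by apply: hxs; lia.
have -> : xs k.+1 = xs k by lra.
by rewrite subrr mulr0 mul0r.
Qed.

Theorem lemma2 (R : realType) (n : nat) (q : nat -> R) (C B : R) (xs : nat -> R)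
  (hn : (1 <= n)%N)
  (hq1 : 0 < q 1%N)
  (hq : forall i : nat, (1 <= i < n)%N -> q i <= q i.+1)
  (hC : 0 < C) (hB : 0 < B)
  (hx : forall i : nat, (1 <= i <= n)%N -> 0 <= xs i <= q i)
  (hxs : forall i : nat, (1 <= i < n)%N -> xs i <= xs i.+1) :
  ((exists f : R -> R, feasible n q C B f xs) <-> budget_cond n q C B xs) /\
  (budget_cond n q C B xs -> feasible n q C B (step_reward n q C xs) xs).
Proof.
have qpos : forall k, (1 <= k <= n)%N -> 0 < q k.
  move=> k hk; apply: lt_le_trans hq1 _; apply: (q_mono hq); lia.
have F1 : Fv q C xs 1 = C * (xs 1%N / q 1%N) by rewrite /Fv big_geq // add0r.
have Fge0 : forall j, (1 <= j <= n)%N -> 0 <= Fv q C xs j.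
  move=> j hj.
  have : 0 <= Fv q C xs j - Fv q C xs 1.
    rewrite Fv_tele; last by lia.
    rewrite big_nat_cond; apply: sumr_ge0 => k /andP[hk _].
    apply: divr_ge0; last by apply: ltW; apply: qpos; lia.
    apply: mulr_ge0; first exact: ltW.
    by rewrite subr_ge0; apply: hxs; lia.
  have : 0 <= Fv q C xs 1.
    rewrite F1; apply: mulr_ge0; first exact: ltW.
    apply: divr_ge0; [by case/andP: (hx 1%N ltac:(lia)) | exact: ltW].
  lra.
have H2 : budget_cond n q C B xs -> feasible n q C B (step_reward n q C xs) xs.
  move=> hb; split; [|split].
  - move=> x _; case: (boolP (x < xs 1%N)) => h.
      by rewrite /step_reward h.
    have [j hj [_ ->]] := @step_gen R n q C xs x hn h.
    exact: Fge0.
  - move=> i hi; split; first exact: hx.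
    move=> x /andP[x0 xq]; rewrite /utility step_at //.
    have qi := qpos i hi.
    have U1 := U_le hq1 hq hC hxs i 1%N hi ltac:(lia).
    case: (boolP (x < xs 1%N)) => h.
      rewrite {1}/step_reward h.
      have A : 0 <= x * C / q i.
        by apply: divr_ge0; [apply: mulr_ge0 => //; exact: ltW | exact: ltW].
      have B1 : xs 1%N * C / q i <= Fv q C xs 1.
        rewrite F1 mulrA [C * _]mulrC; apply: ler_wpM2l.
          apply: mulr_ge0; [by case/andP: (hx 1%N ltac:(lia)) | exact: ltW].
        rewrite lef_pV2 ?posrE //; apply: (q_mono hq); lia.
      lra.
    have [j hj [hjx ->]] := @step_gen R n q C xs x hn h.
    have Uj := U_le hq1 hq hC hxs i j hi hj.
    have A : xs j * C / q i <= x * C / q i.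
      apply: ler_wpM2r; first by rewrite invr_ge0 ltW.
      by apply: ler_wpM2r => //; exact: ltW.
    lra.
  - rewrite (eq_big_nat _ _ (fun i hi => @step_at R n q C xs hxs i _)); last by lia.
    by rewrite Fv_sum.
split=> //; split; last first.
  by move=> hb; exists (step_reward n q C xs); exact: H2.
case=> f [hf [hic hsum]].
have lb : forall i, (1 <= i <= n)%N -> Fv q C xs i <= f (xs i).
  elim=> [|i IH] hi; first by lia.
  case: (eqVneq i 0%N) => [i0|i0].
    subst i; rewrite F1.
    have [_ IC] := hic 1%N hi.
    have := IC 0 ltac:(by rewrite lexx ltW).
    rewrite /utility mul0r mul0r subr0.
    have := hf 0 (lexx 0).
    have E : C * (xs 1%N / q 1%N) = xs 1%N * C / q 1%N by ring.
    lra.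
  have IHi := IH ltac:(lia).
  have [_ IC] := hic i.+1 hi.
  have xi := hx i ltac:(lia).
  have xi1 := hx i.+1 hi.
  have xsi := hxs i ltac:(lia).
  have := IC (xs i) ltac:(apply/andP; split; lra).
  rewrite /utility.
  have St := @Fv_step R q C xs i ltac:(lia).
  have E : C * (xs i.+1 - xs i) / q i.+1 = xs i.+1 * C / q i.+1 - xs i * C / q i.+1 by ring.
  lra.
rewrite /budget_cond -Fv_sum //; apply: le_trans hsum.
by apply: ler_sum_nat => i hi; apply: lb; lia.
Qed.
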